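(* $\widetilde{\mathbb{R}}$ and $\widetilde{\mathbb{R}}_{sm}$ are reduced normal $f$-rings.
   Context: Let $I=(0,1]$. $\widetilde{\mathbb{R}}=\mathcal{E}_M/\mathcal{N}$ with $\mathcal{E}_M=\{(r_\varepsilon)\in\mathbb{R}^I:\exists N: |r_\varepsilon|=O(\varepsilon^{-N})\}$, $\mathcal{N}=\{(r_\varepsilon)\in\mathbb{R}^I:\forall m: |r_\varepsilon|=O(\varepsilon^m)\}$; $\widetilde{\mathbb{R}}_{sm}$ (resp. $\widetilde{\mathbb{R}}_{co}$) is defined in the same way using only nets with $\varepsilon\mapsto r_\varepsilon$ smooth (resp. continuous), and the natural map $\tau_{sm}:\widetilde{\mathbb{R}}_{sm}\to\widetilde{\mathbb{R}}_{co}$ is a ring isomorphism. Order: $r\le s$ iff there are representatives with $r_\varepsilon\le s_\varepsilon$ for all $\varepsilon$; lattice operations are given by componentwise $\max$, $\min$ of representatives (in $\widetilde{\mathbb{R}}_{sm}$ transported via $\tau_{sm}^{-1}$ from $\widetilde{\mathbb{R}}_{co}$). A ring is reduced if it has no nonzero nilpotents. An $f$-ring is a commutative ring with 1 which is a lattice-ordered ring such that $(r\wedge s)t=rt\wedge st$ whenever $t\ge0$. A reduced commutative $f$-ring $R$ with 1 is normal if for all $r,s\in R$ with $rs=0$ one has $R=\mathrm{Ann}(r)+\mathrm{Ann}(s)$, where $\mathrm{Ann}(r)=\{t\in R: rt=0\}$. *)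

(* Defs.v *)
From Stdlib Require Import Reals.
From Coquelicot Require Import Coquelicot.
Open Scope R_scope.

(* Nets indexed by I = (0,1] are represented as functions R -> R; only their
   values on I matter (all notions below quantify over I only). *)
Definition net := R -> R.
Definition inI (e : R) : Prop := 0 < e /\ e <= 1.

Definition moderate (r : net) : Prop :=
  exists (N : nat) (C eta : R), inI eta /\
    forall e, 0 < e -> e <= eta -> Rabs (r e) <= C / (e ^ N).

Definition negligible (r : net) : Prop :=
  forall m : nat, exists (C eta : R), inI eta /\
    forall e, 0 < e -> e <= eta -> Rabs (r e) <= C * (e ^ m).

Definition geq (r s : net) : Prop := negligible (fun e => r e - s e).

Definition cont_net (r : net) : Prop :=
  forall e, inI e -> forall eps, 0 < eps -> exists d, 0 < d /\
    forall x, inI x -> Rabs (x - e) < d -> Rabs (r x - r e) < eps.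

(* smoothness of eps |-> r_eps on (0,1] (C^infty up to the endpoint 1):
   restriction to (0,1] of a C^infty function on (0,+oo). *)
Definition smooth_net (r : net) : Prop :=
  exists g : R -> R, (forall e, inI e -> g e = r e) /\
    forall (n : nat) (x : R), 0 < x -> ex_derive (Derive_n g n) x.

Definition nadd (r s : net) : net := fun e => r e + s e.
Definition nmul (r s : net) : net := fun e => r e * s e.
Definition nopp (r : net) : net := fun e => - r e.
Definition nconst (c : R) : net := fun _ => c.
Definition nmin (r s : net) : net := fun e => Rmin (r e) (s e).
Definition nmax (r s : net) : net := fun e => Rmax (r e) (s e).
Fixpoint npow (r : net) (n : nat) : net :=
  match n with O => nconst 1 | S k => nmul r (npow r k) end.

(* Order: r <= s iff there are representatives (drawn from the class Q of
   admissible representative nets) r' ~ r, s' ~ s with r'_eps <= s'_eps for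
   all eps in I.  For R~ : Q = all nets; for R~_sm the order is transported
   from R~_co via tau_sm, so Q = continuous nets. *)
Definition nle (Q : net -> Prop) (r s : net) : Prop :=
  exists r' s', Q r' /\ Q s' /\ geq r r' /\ geq s s' /\
    forall e, inI e -> r' e <= s' e.

(* A generalized-number ring given as a setoid: carrier K (representing nets),
   equality geq, pointwise operations, order nle Q, and meet/join of the
   classes of r, s = the class (in K) of the componentwise min/max. *)
Definition reduced_normal_fring (K Q : net -> Prop) : Prop :=
  K (nconst 0) /\ K (nconst 1) /\
  (forall r s, K r -> K s -> K (nadd r s)) /\
  (forall r s, K r -> K s -> K (nmul r s)) /\
  (forall r, K r -> K (nopp r)) /\
  (forall r, K r -> geq r r) /\
  (forall r s, K r -> K s -> geq r s -> geq s r) /\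
  (forall r s t, K r -> K s -> K t -> geq r s -> geq s t -> geq r t) /\
  (forall r r' s s', K r -> K r' -> K s -> K s' -> geq r r' -> geq s s' ->
      geq (nadd r s) (nadd r' s') /\ geq (nmul r s) (nmul r' s')) /\
  (forall r r', K r -> K r' -> geq r r' -> geq (nopp r) (nopp r')) /\
  (forall r s t, K r -> K s -> K t ->
      geq (nadd r (nadd s t)) (nadd (nadd r s) t) /\
      geq (nadd r s) (nadd s r) /\
      geq (nadd r (nconst 0)) r /\
      geq (nadd r (nopp r)) (nconst 0) /\
      geq (nmul r (nmul s t)) (nmul (nmul r s) t) /\
      geq (nmul r s) (nmul s r) /\
      geq (nmul r (nconst 1)) r /\
      geq (nmul r (nadd s t)) (nadd (nmul r s) (nmul r t))) /\
  (forall r, K r -> nle Q r r) /\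
  (forall r s t, K r -> K s -> K t -> nle Q r s -> nle Q s t -> nle Q r t) /\
  (forall r s, K r -> K s -> nle Q r s -> nle Q s r -> geq r s) /\
  (forall r r' s s', K r -> K r' -> K s -> K s' -> geq r r' -> geq s s' ->
      nle Q r s -> nle Q r' s') /\
  (forall r s t, K r -> K s -> K t -> nle Q r s -> nle Q (nadd r t) (nadd s t)) /\
  (forall r s, K r -> K s -> nle Q (nconst 0) r -> nle Q (nconst 0) s ->
      nle Q (nconst 0) (nmul r s)) /\
  (forall r s, K r -> K s -> exists m, K m /\ geq m (nmin r s)) /\
  (forall r s, K r -> K s -> exists m, K m /\ geq m (nmax r s)) /\
  (forall r s m, K r -> K s -> K m -> geq m (nmin r s) ->
      nle Q m r /\ nle Q m s /\
      forall z, K z -> nle Q z r -> nle Q z s -> nle Q z m) /\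
  (forall r s m, K r -> K s -> K m -> geq m (nmax r s) ->
      nle Q r m /\ nle Q s m /\
      forall z, K z -> nle Q r z -> nle Q s z -> nle Q m z) /\
  (* f-ring: (r /\ s) t = rt /\ st for t >= 0 *)
  (forall r s t m1 m2, K r -> K s -> K t -> K m1 -> K m2 ->
      nle Q (nconst 0) t ->
      geq m1 (nmin r s) -> geq m2 (nmin (nmul r t) (nmul s t)) ->
      geq (nmul m1 t) m2) /\
  (forall r (n : nat), K r -> geq (npow r (S n)) (nconst 0) -> geq r (nconst 0)) /\
  (* normal: rs = 0 -> R = Ann(r) + Ann(s) *)
  (forall r s, K r -> K s -> geq (nmul r s) (nconst 0) ->
      forall x, K x -> exists a b, K a /\ K b /\
        geq (nmul r a) (nconst 0) /\ geq (nmul s b) (nconst 0) /\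
        geq x (nadd a b)).

Definition K_full (r : net) : Prop := moderate r.
Definition K_sm (r : net) : Prop := smooth_net r /\ moderate r.
Definition Q_all (r : net) : Prop := True.

(* Main.v *)
Require Import Defs.
From Stdlib Require Import Reals.
From Coquelicot Require Import Coquelicot.
From Stdlib Require Import Lra Lia.
Open Scope R_scope.


Lemma inI_min a b : inI a -> inI b -> inI (Rmin a b).
Proof. unfold inI, Rmin; destruct (Rle_dec a b); lra. Qed.

Lemma le_min_l e a b : e <= Rmin a b -> e <= a.
Proof. unfold Rmin; destruct (Rle_dec a b); lra. Qed.
Lemma le_min_r e a b : e <= Rmin a b -> e <= b.
Proof. unfold Rmin; destruct (Rle_dec a b); lra. Qed.

Lemma inI_of e eta : inI eta -> 0 < e -> e <= eta -> inI e.
Proof. unfold inI; lra. Qed.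

Lemma mod_intro r N C eta : inI eta ->
  (forall e, 0 < e -> e <= eta -> Rabs (r e) * e ^ N <= C) -> moderate r.
Proof.
  intros HI H. exists N, C, eta. split; auto. intros e He Hle.
  assert (P : 0 < e ^ N) by (apply pow_lt; lra).
  specialize (H e He Hle).
  apply Rmult_le_reg_r with (e ^ N); auto.
  replace (C / e ^ N * e ^ N) with C by (field; lra). exact H.
Qed.

Lemma mod_elim r : moderate r -> exists N C eta, inI eta /\
  forall e, 0 < e -> e <= eta -> Rabs (r e) * e ^ N <= C.
Proof.
  intros (N & C & eta & HI & H). exists N, C, eta. split; auto.
  intros e He Hle. assert (P : 0 < e ^ N) by (apply pow_lt; lra).
  specialize (H e He Hle).
  replace C with (C / e ^ N * e ^ N) by (field; lra).
  apply Rmult_le_compat_r; lra.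
Qed.

Lemma pow_le1 e k : 0 < e -> e <= 1 -> e ^ k <= 1.
Proof.
  intros. induction k; simpl; [lra|].
  assert (0 <= e ^ k) by (apply pow_le; lra). nra.
Qed.

Lemma negl_le f g : negligible g -> (forall e, inI e -> Rabs (f e) <= Rabs (g e)) -> negligible f.
Proof.
  intros Hg H m. destruct (Hg m) as (C & eta & HI & Hb). exists C, eta; split; auto.
  intros e He Hle. eapply Rle_trans; [apply H; eapply inI_of; eauto|]. auto.
Qed.

Lemma negl_add f g : negligible f -> negligible g -> negligible (fun e => f e + g e).
Proof.
  intros Hf Hg m. destruct (Hf m) as (C1 & e1 & HI1 & B1).
  destruct (Hg m) as (C2 & e2 & HI2 & B2).
  exists (C1 + C2), (Rmin e1 e2); split; [apply inI_min; auto|].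
  intros e He Hle. specialize (B1 e He (le_min_l _ _ _ Hle)).
  specialize (B2 e He (le_min_r _ _ _ Hle)).
  eapply Rle_trans; [apply Rabs_triang|]. lra.
Qed.

Lemma negl_0 : negligible (fun _ => 0).
Proof.
  intros m. exists 0, 1. split; [unfold inI; lra|]. intros. rewrite Rabs_R0. lra.
Qed.

Lemma negl_pw0 f : (forall e, inI e -> f e = 0) -> negligible f.
Proof.
  intros H. apply negl_le with (fun _ => 0); [apply negl_0|].
  intros e He. rewrite H; auto. lra.
Qed.

Lemma negl_mulmod f g : negligible f -> moderate g -> negligible (fun e => f e * g e).
Proof.
  intros Hf Hg m. apply mod_elim in Hg. destruct Hg as (N & Cg & eg & HIg & Bg).
  destruct (Hf (m + N)%nat) as (C & ef & HIf & Bf).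
  exists (C * Cg), (Rmin ef eg); split; [apply inI_min; auto|].
  intros e He Hle. specialize (Bf e He (le_min_l _ _ _ Hle)).
  specialize (Bg e He (le_min_r _ _ _ Hle)).
  rewrite pow_add in Bf.
  assert (P : 0 < e ^ N) by (apply pow_lt; lra).
  assert (P2 : 0 < e ^ m) by (apply pow_lt; lra).
  rewrite Rabs_mult. apply Rmult_le_reg_r with (e ^ N); auto.
  replace (Rabs (f e) * Rabs (g e) * e ^ N) with (Rabs (f e) * (Rabs (g e) * e ^ N)) by ring.
  assert (0 <= Rabs (f e)) by apply Rabs_pos.
  assert (0 <= Rabs (g e) * e ^ N) by (apply Rmult_le_pos; [apply Rabs_pos| lra]).
  apply Rle_trans with (C * (e ^ m * e ^ N) * Cg).
  - apply Rmult_le_compat; auto.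
  - nra.
Qed.

Lemma mod_of_negl f : negligible f -> moderate f.
Proof.
  intros H. destruct (H 0%nat) as (C & eta & HI & B).
  apply mod_intro with 0%nat C eta; auto. intros e He Hle. specialize (B e He Hle).
  simpl in *. lra.
Qed.

Lemma mod_le f g : moderate g -> (forall e, inI e -> Rabs (f e) <= Rabs (g e)) -> moderate f.
Proof.
  intros Hg H. apply mod_elim in Hg. destruct Hg as (N & C & eta & HI & B).
  apply mod_intro with N C eta; auto. intros e He Hle.
  assert (P : 0 < e ^ N) by (apply pow_lt; lra).
  eapply Rle_trans; [|apply (B e He Hle)]. apply Rmult_le_compat_r; [lra|].
  apply H; eapply inI_of; eauto.
Qed.

Lemma mod_add f g : moderate f -> moderate g -> moderate (fun e => f e + g e).
Proof.
  intros Hf Hg. apply mod_elim in Hf. apply mod_elim in Hg.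
  destruct Hf as (N1 & C1 & e1 & HI1 & B1). destruct Hg as (N2 & C2 & e2 & HI2 & B2).
  apply mod_intro with (N1 + N2)%nat (C1 + C2) (Rmin e1 e2); [apply inI_min; auto|].
  intros e He Hle. specialize (B1 e He (le_min_l _ _ _ Hle)).
  specialize (B2 e He (le_min_r _ _ _ Hle)).
  assert (Hi : inI e) by (apply (inI_of e (Rmin e1 e2)); auto; apply inI_min; auto).
  destruct Hi as [_ He1].
  assert (P1 : 0 < e ^ N1) by (apply pow_lt; lra).
  assert (P2 : 0 < e ^ N2) by (apply pow_lt; lra).
  assert (Q1 := pow_le1 e N1 He He1). assert (Q2 := pow_le1 e N2 He He1).
  rewrite pow_add.
  assert (Rabs (f e + g e) <= Rabs (f e) + Rabs (g e)) by apply Rabs_triang.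
  assert (0 <= Rabs (f e)) by apply Rabs_pos. assert (0 <= Rabs (g e)) by apply Rabs_pos.
  assert (X1 : 0 <= Rabs (f e) * e ^ N1) by (apply Rmult_le_pos; lra).
  assert (X2 : 0 <= Rabs (g e) * e ^ N2) by (apply Rmult_le_pos; lra).
  assert (Rabs (f e) * e ^ N1 * e ^ N2 <= C1).
  { apply Rle_trans with (Rabs (f e) * e ^ N1 * 1); [apply Rmult_le_compat_l; lra| lra]. }
  assert (Rabs (g e) * e ^ N2 * e ^ N1 <= C2).
  { apply Rle_trans with (Rabs (g e) * e ^ N2 * 1); [apply Rmult_le_compat_l; lra| lra]. }
  assert (0 < e ^ N1 * e ^ N2) by (apply Rmult_lt_0_compat; lra).
  apply Rle_trans with ((Rabs (f e) + Rabs (g e)) * (e ^ N1 * e ^ N2)).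
  - apply Rmult_le_compat_r; lra.
  - nra.
Qed.

Lemma mod_mul f g : moderate f -> moderate g -> moderate (fun e => f e * g e).
Proof.
  intros Hf Hg. apply mod_elim in Hf. apply mod_elim in Hg.
  destruct Hf as (N1 & C1 & e1 & HI1 & B1). destruct Hg as (N2 & C2 & e2 & HI2 & B2).
  apply mod_intro with (N1 + N2)%nat (C1 * C2) (Rmin e1 e2); [apply inI_min; auto|].
  intros e He Hle. specialize (B1 e He (le_min_l _ _ _ Hle)).
  specialize (B2 e He (le_min_r _ _ _ Hle)).
  assert (P1 : 0 < e ^ N1) by (apply pow_lt; lra).
  assert (P2 : 0 < e ^ N2) by (apply pow_lt; lra).
  rewrite pow_add, Rabs_mult.
  replace (Rabs (f e) * Rabs (g e) * (e ^ N1 * e ^ N2)) with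
    ((Rabs (f e) * e ^ N1) * (Rabs (g e) * e ^ N2)) by ring.
  apply Rmult_le_compat; auto; apply Rmult_le_pos; try lra; apply Rabs_pos.
Qed.

Lemma mod_const c : moderate (fun _ => c).
Proof.
  apply mod_intro with 0%nat (Rabs c) 1; [unfold inI; lra|]. intros; simpl; lra.
Qed.

Lemma geq_pw r s : (forall e, inI e -> r e = s e) -> geq r s.
Proof. intros H. apply negl_pw0. intros e He. rewrite H; auto. ring. Qed.

Lemma geq_refl r : geq r r.
Proof. apply geq_pw; auto. Qed.

Lemma geq_sym r s : geq r s -> geq s r.
Proof.
  intros H. apply negl_le with (fun e => r e - s e); auto.
  intros e _. rewrite Rabs_minus_sym. lra.
Qed.

Lemma geq_trans r s t : geq r s -> geq s t -> geq r t.
Proof.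
  intros H1 H2. unfold geq.
  apply negl_le with (fun e => (r e - s e) + (s e - t e)); [apply negl_add; auto|].
  intros e _. replace (r e - s e + (s e - t e)) with (r e - t e) by ring. lra.
Qed.

Lemma mod_geq r s : moderate r -> geq r s -> moderate s.
Proof.
  intros Hr H. apply mod_le with (fun e => r e + - (r e - s e)).
  - apply mod_add; auto. apply mod_of_negl. apply negl_le with (fun e => r e - s e); auto.
    intros; rewrite Rabs_Ropp; lra.
  - intros; replace (r e + - (r e - s e)) with (s e) by ring; lra.
Qed.

Lemma negl_pow y n k : (1 <= k)%nat -> negligible n ->
  (forall e, inI e -> Rabs (y e) ^ k <= Rabs (n e)) -> negligible y.
Proof.
  intros Hk Hn H m. destruct (Hn (m * k)%nat) as (C & eta & HI & B).
  set (C' := Rmax 1 C + 1).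
  assert (HC1 : 1 <= C') by (unfold C'; generalize (Rmax_l 1 C); lra).
  assert (HC2 : C < C') by (unfold C'; generalize (Rmax_r 1 C); lra).
  exists C', eta; split; auto. intros e He Hle.
  destruct (Rle_lt_dec (Rabs (y e)) (C' * e ^ m)) as [Ok|Bad]; auto. exfalso.
  specialize (B e He Hle). specialize (H e (inI_of _ _ HI He Hle)).
  assert (P : 0 < e ^ m) by (apply pow_lt; lra).
  assert (A1 : (C' * e ^ m) ^ k <= Rabs (y e) ^ k) by (apply pow_incr; nra).
  rewrite Rpow_mult_distr in A1.
  assert (A2 : C' <= C' ^ k).
  { destruct k as [|k]; [lia|]. simpl. assert (1 <= C' ^ k) by (apply pow_R1_Rle; lra). nra. }
  assert (P2 : 0 < (e ^ m) ^ k) by (apply pow_lt; lra).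
  rewrite pow_mult in B. nra.
Qed.


Lemma negl_eq f g : negligible g -> (forall e, inI e -> f e = g e) -> negligible f.
Proof. intros H1 H2. apply negl_le with g; auto. intros e He; rewrite H2; auto; lra. Qed.

Lemma negl_abs f : negligible f -> negligible (fun e => Rabs (f e)).
Proof. intros H. apply negl_le with f; auto. intros; rewrite Rabs_Rabsolu; lra. Qed.

Lemma geq_mul r r' s s' : moderate s -> moderate r' -> geq r r' -> geq s s' ->
  geq (nmul r s) (nmul r' s').
Proof.
  intros Hs Hr' H1 H2. unfold geq, nmul.
  apply negl_eq with (fun e => (r e - r' e) * s e + (s e - s' e) * r' e).
  - apply negl_add; apply negl_mulmod; auto.
  - intros; ring.
Qed.

Lemma geq_add r r' s s' : geq r r' -> geq s s' -> geq (nadd r s) (nadd r' s').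
Proof.
  intros H1 H2. unfold geq, nadd.
  apply negl_eq with (fun e => (r e - r' e) + (s e - s' e)); [apply negl_add; auto|].
  intros; ring.
Qed.

Lemma lip_min a b c d : Rabs (Rmin a b - Rmin c d) <= Rabs (a - c) + Rabs (b - d).
Proof. unfold Rmin; destruct (Rle_dec a b); destruct (Rle_dec c d);
  unfold Rabs; repeat destruct Rcase_abs; lra. Qed.
Lemma lip_max a b c d : Rabs (Rmax a b - Rmax c d) <= Rabs (a - c) + Rabs (b - d).
Proof. unfold Rmax; destruct (Rle_dec a b); destruct (Rle_dec c d);
  unfold Rabs; repeat destruct Rcase_abs; lra. Qed.
Lemma lip_abs a c : Rabs (Rabs a - Rabs c) <= Rabs (a - c).
Proof. unfold Rabs; repeat destruct Rcase_abs; lra. Qed.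

Section Generic.
Variables K Q : net -> Prop.
Hypothesis HKm : forall r, K r -> moderate r.
Hypothesis HQK : forall r, K r -> Q r.
Hypothesis HQc : forall c, Q (nconst c).
Hypothesis HQlip : forall a b h, Q a -> Q b ->
  (forall x y, inI x -> inI y -> Rabs (h x - h y) <= Rabs (a x - a y) + Rabs (b x - b y)) -> Q h.

Lemma Q_lin a b : Q a -> Q b -> Q (fun e => a e - b e).
Proof. intros. apply HQlip with a b; auto. intros. unfold Rabs; repeat destruct Rcase_abs; lra. Qed.
Lemma Q_add a b : Q a -> Q b -> Q (fun e => a e + b e).
Proof. intros. apply HQlip with a b; auto. intros. unfold Rabs; repeat destruct Rcase_abs; lra. Qed.
Lemma Q_abs a : Q a -> Q (fun e => Rabs (a e)).
Proof. intros. apply HQlip with a a; auto. intros.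
  generalize (lip_abs (a x) (a y)). generalize (Rabs_pos (a x - a y)). lra. Qed.
Lemma Q_min a b : Q a -> Q b -> Q (nmin a b).
Proof. intros. apply HQlip with a b; auto. intros. apply lip_min. Qed.
Lemma Q_max a b : Q a -> Q b -> Q (nmax a b).
Proof. intros. apply HQlip with a b; auto. intros. apply lip_max. Qed.

Lemma nle_refl r : K r -> nle Q r r.
Proof. intros. exists r, r. repeat split; auto using geq_refl. intros; lra. Qed.

Lemma nle_trans r s t : nle Q r s -> nle Q s t -> nle Q r t.
Proof.
  intros (r1 & s1 & Qr1 & Qs1 & Hr & Hs & H1) (s2 & t2 & Qs2 & Qt2 & Hs2 & Ht & H2).
  exists (fun e => r1 e - Rabs (s1 e - s2 e)), t2.
  split; [apply Q_lin; auto; apply Q_abs, Q_lin; auto|].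
  repeat split; auto.
  - unfold geq.
    apply negl_eq with (fun e => (r e - r1 e) + Rabs (s1 e - s2 e)).
    + apply negl_add; auto. apply negl_abs.
      apply (geq_trans _ s); [apply geq_sym|]; auto.
    + intros; ring.
  - intros e He. specialize (H1 e He). specialize (H2 e He).
    unfold Rabs; destruct Rcase_abs; lra.
Qed.

Lemma nle_antisym r s : nle Q r s -> nle Q s r -> geq r s.
Proof.
  intros (r1 & s1 & _ & _ & Hr & Hs & H1) (s2 & r2 & _ & _ & Hs2 & Hr2 & H2).
  unfold geq.
  apply negl_le with (fun e => Rabs ((r e - r1 e) - (s e - s1 e)) + Rabs ((r e - r2 e) - (s e - s2 e))).
  - assert (G : forall a b, geq r a -> geq s b ->
        negligible (fun e => Rabs ((r e - a e) - (s e - b e)))).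
    { intros a b Ha Hb. apply negl_abs.
      apply negl_eq with (fun e => (r e - a e) + - (s e - b e)); [|intros; ring].
      apply negl_add; auto. apply negl_le with (fun e => s e - b e); auto.
      intros; rewrite Rabs_Ropp; lra. }
    apply negl_add; apply G; auto.
  - intros e He. specialize (H1 e He). specialize (H2 e He).
    unfold Rabs; repeat destruct Rcase_abs; lra.
Qed.

Lemma nle_compat r r' s s' : geq r r' -> geq s s' -> nle Q r s -> nle Q r' s'.
Proof.
  intros Hr Hs (r1 & s1 & Q1 & Q2 & H1 & H2 & H).
  exists r1, s1. repeat split; auto.
  - apply geq_trans with r; auto using geq_sym.
  - apply geq_trans with s; auto using geq_sym.
Qed.

Lemma nle_add r s t : K t -> nle Q r s -> nle Q (nadd r t) (nadd s t).
Proof.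
  intros Kt (r1 & s1 & Q1 & Q2 & H1 & H2 & H).
  exists (nadd r1 t), (nadd s1 t). repeat split.
  - apply Q_add; auto.
  - apply Q_add; auto.
  - apply geq_add; auto using geq_refl.
  - apply geq_add; auto using geq_refl.
  - intros e He; unfold nadd; specialize (H e He); lra.
Qed.

Lemma nonneg_abs r : nle Q (nconst 0) r -> geq r (fun e => Rabs (r e)).
Proof.
  intros (z & r1 & _ & _ & Hz & Hr & H). unfold geq.
  apply negl_le with (fun e => 2 * Rabs (r e - r1 e) + 2 * Rabs (nconst 0 e - z e)).
  - assert (G : forall f, negligible f -> negligible (fun e => 2 * Rabs (f e))).
    { intros f Hf. apply negl_eq with (fun e => Rabs (f e) * 2); [|intros; ring].
      apply negl_mulmod; [apply negl_abs; auto| apply mod_const]. }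
    apply negl_add; apply (G (fun e => _ e - _ e)); auto.
  - intros e He. specialize (H e He). unfold nconst in *.
    unfold Rabs; repeat destruct Rcase_abs; lra.
Qed.

Lemma nle_mul r s : K r -> K s -> nle Q (nconst 0) r -> nle Q (nconst 0) s ->
  (K (nmul r s)) -> nle Q (nconst 0) (nmul r s).
Proof.
  intros Kr Ks Hr Hs Krs.
  exists (nconst 0), (fun e => Rabs (nmul r s e)). repeat split; auto using geq_refl.
  - apply Q_abs; auto.
  - apply geq_trans with (nmul (fun e => Rabs (r e)) (fun e => Rabs (s e))).
    + apply geq_mul; auto using nonneg_abs;
      first [apply mod_le with s; auto; intros; rewrite Rabs_Rabsolu; lra
            |apply mod_le with r; auto; intros; rewrite Rabs_Rabsolu; lra].
    + apply geq_pw. intros; unfold nmul; rewrite Rabs_mult; auto.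
  - intros; unfold nconst; apply Rabs_pos.
Qed.

Lemma meet_props r s m : K r -> K s -> geq m (nmin r s) ->
  nle Q m r /\ nle Q m s /\ forall z, K z -> nle Q z r -> nle Q z s -> nle Q z m.
Proof.
  intros Kr Ks Hm. split; [|split].
  - exists (nmin r s), r. repeat split; auto using geq_refl, Q_min.
    intros; unfold nmin; apply Rmin_l.
  - exists (nmin r s), s. repeat split; auto using geq_refl, Q_min.
    intros; unfold nmin; apply Rmin_r.
  - intros z Kz (z1 & r1 & Qz1 & Qr1 & Hz1 & Hr1 & H1) (z2 & s2 & Qz2 & Qs2 & Hz2 & Hs2 & H2).
    exists (fun e => Rmin (z1 e) (z2 e) - Rabs (r1 e - r e) - Rabs (s2 e - s e)), (nmin r s).
    repeat split; auto using Q_min.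
    + apply Q_lin; [apply Q_lin|]; [apply Q_min; auto|apply Q_abs, Q_lin; auto|apply Q_abs, Q_lin; auto].
    + unfold geq.
      apply negl_le with (fun e => (Rabs (z e - z1 e) + Rabs (z e - z2 e)) +
                                   (Rabs (r1 e - r e) + Rabs (s2 e - s e))).
      * apply negl_add; apply negl_add; apply negl_abs; auto;
          apply geq_sym; auto.
      * intros e He. unfold Rmin; destruct Rle_dec; unfold Rabs; repeat destruct Rcase_abs; lra.
    + intros e He. specialize (H1 e He). specialize (H2 e He). unfold nmin.
      apply Rmin_glb; unfold Rmin; destruct Rle_dec; unfold Rabs; repeat destruct Rcase_abs; lra.
Qed.

Lemma join_props r s m : K r -> K s -> geq m (nmax r s) ->
  nle Q r m /\ nle Q s m /\ forall z, K z -> nle Q r z -> nle Q s z -> nle Q m z.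
Proof.
  intros Kr Ks Hm. split; [|split].
  - exists r, (nmax r s). repeat split; auto using geq_refl, Q_max.
    intros; unfold nmax; apply Rmax_l.
  - exists s, (nmax r s). repeat split; auto using geq_refl, Q_max.
    intros; unfold nmax; apply Rmax_r.
  - intros z Kz (r1 & z1 & Qr1 & Qz1 & Hr1 & Hz1 & H1) (s2 & z2 & Qs2 & Qz2 & Hs2 & Hz2 & H2).
    exists (nmax r s), (fun e => Rmax (z1 e) (z2 e) + Rabs (r1 e - r e) + Rabs (s2 e - s e)).
    repeat split; auto using Q_max.
    + apply Q_add; [apply Q_add|]; [apply Q_max; auto|apply Q_abs, Q_lin; auto|apply Q_abs, Q_lin; auto].
    + unfold geq.
      apply negl_le with (fun e => (Rabs (z e - z1 e) + Rabs (z e - z2 e)) +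
                                   (Rabs (r1 e - r e) + Rabs (s2 e - s e))).
      * apply negl_add; apply negl_add; apply negl_abs; auto;
          apply geq_sym; auto.
      * intros e He. unfold Rmax; destruct Rle_dec; unfold Rabs; repeat destruct Rcase_abs; lra.
    + intros e He. specialize (H1 e He). specialize (H2 e He). unfold nmax.
      apply Rmax_lub; unfold Rmax; destruct Rle_dec; unfold Rabs; repeat destruct Rcase_abs; lra.
Qed.

Lemma fr_ineq a b t t1 z : z <= t1 ->
  Rabs (Rmin a b * t - Rmin (a * t) (b * t)) <= Rabs (a - b) * (Rabs (t - t1) + Rabs (0 - z)).
Proof.
  intros Hz. assert (P : 0 <= Rabs (a - b)) by apply Rabs_pos.
  destruct (Rle_lt_dec 0 t) as [Ht|Ht].
  - replace (Rmin a b * t - Rmin (a * t) (b * t)) with 0.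
    + rewrite Rabs_R0. apply Rmult_le_pos; auto.
      generalize (Rabs_pos (t - t1)) (Rabs_pos (0 - z)); lra.
    + unfold Rmin; destruct (Rle_dec a b); destruct (Rle_dec (a*t) (b*t)); try nra.
  - replace (Rmin a b * t - Rmin (a * t) (b * t)) with (Rabs (a - b) * - t).
    + rewrite Rabs_mult, (Rabs_right (- t)) by lra. rewrite Rabs_Rabsolu.
      apply Rmult_le_compat_l; auto. unfold Rabs; repeat destruct Rcase_abs; lra.
    + unfold Rmin; destruct (Rle_dec a b); destruct (Rle_dec (a*t) (b*t));
      unfold Rabs; destruct Rcase_abs; try nra.
Qed.

Lemma fring r s t m1 m2 : K r -> K s -> K t -> nle Q (nconst 0) t ->
  geq m1 (nmin r s) -> geq m2 (nmin (nmul r t) (nmul s t)) -> geq (nmul m1 t) m2.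
Proof.
  intros Kr Ks Kt (z & t1 & _ & _ & Hz & Ht & H) H1 H2.
  assert (Mmin : moderate (nmin r s)).
  { apply mod_le with (fun e => Rabs (r e) + Rabs (s e)).
    - apply mod_add; [apply mod_le with r|apply mod_le with s]; auto; intros; rewrite Rabs_Rabsolu; lra.
    - intros e _. unfold nmin, Rmin; destruct Rle_dec;
      unfold Rabs; repeat destruct Rcase_abs; lra. }
  apply geq_trans with (nmul (nmin r s) t).
  { apply geq_mul; auto using geq_refl. }
  apply geq_trans with (nmin (nmul r t) (nmul s t)); [|apply geq_sym; auto].
  unfold geq.
  apply negl_le with (fun e => (Rabs (t e - t1 e) + Rabs (nconst 0 e - z e)) * Rabs (r e - s e)).
  - apply negl_mulmod.
    + apply negl_add; apply negl_abs; auto.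
    + apply mod_le with (fun e => r e + - s e).
      * apply mod_add; auto. apply mod_le with s; auto. intros; rewrite Rabs_Ropp; lra.
      * intros; rewrite Rabs_Rabsolu; unfold Rminus; lra.
  - intros e He. unfold nmul, nmin, nconst.
    rewrite (Rabs_right (_ * _)).
    + rewrite (Rmult_comm (_ + _)). apply fr_ineq. apply H; auto.
    + apply Rle_ge, Rmult_le_pos; [|apply Rabs_pos].
      apply Rplus_le_le_0_compat; apply Rabs_pos.
Qed.

Lemma npow_eq r n e : npow r n e = r e ^ n.
Proof. induction n; simpl; unfold nconst, nmul; auto. rewrite IHn; auto. Qed.

Lemma reduced r n : geq (npow r (S n)) (nconst 0) -> geq r (nconst 0).
Proof.
  intros H. unfold geq in *.
  apply negl_pow with (fun e => npow r (S n) e - nconst 0 e) (S n); auto; [lia|].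
  intros e _. unfold nconst. rewrite !Rminus_0_r, npow_eq, RPow_abs. lra.
Qed.

Theorem generic_fring :
  K (nconst 0) -> K (nconst 1) ->
  (forall r s, K r -> K s -> K (nadd r s)) ->
  (forall r s, K r -> K s -> K (nmul r s)) ->
  (forall r, K r -> K (nopp r)) ->
  (forall r s, K r -> K s -> exists m, K m /\ geq m (nmin r s)) ->
  (forall r s, K r -> K s -> exists m, K m /\ geq m (nmax r s)) ->
  (forall r s, K r -> K s -> geq (nmul r s) (nconst 0) ->
      forall x, K x -> exists a b, K a /\ K b /\
        geq (nmul r a) (nconst 0) /\ geq (nmul s b) (nconst 0) /\
        geq x (nadd a b)) ->
  reduced_normal_fring K Q.
Proof.
  intros K0 K1 Kadd Kmul Kopp Hmin Hmax Hnorm.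
  unfold reduced_normal_fring.
  repeat split; auto.
  - intros; apply geq_refl.
  - intros; apply geq_sym; auto.
  - intros r s t _ _ _; apply geq_trans.
  - apply geq_add; auto.
  - apply geq_mul; auto.
  - intros r r' _ _ H. unfold geq, nopp. apply negl_le with (fun e => r e - r' e); auto.
    intros; replace (- r e - - r' e) with (- (r e - r' e)) by ring; rewrite Rabs_Ropp; lra.
  - apply geq_pw; intros; unfold nadd; ring.
  - apply geq_pw; intros; unfold nadd; ring.
  - apply geq_pw; intros; unfold nadd, nconst; ring.
  - apply geq_pw; intros; unfold nadd, nopp, nconst; ring.
  - apply geq_pw; intros; unfold nmul; ring.
  - apply geq_pw; intros; unfold nmul; ring.
  - apply geq_pw; intros; unfold nmul, nconst; ring.
  - apply geq_pw; intros; unfold nmul, nadd; ring.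
  - intros; apply nle_refl; auto.
  - intros r s t _ _ _; apply nle_trans.
  - intros r s _ _; apply nle_antisym.
  - intros r r' s s' _ _ _ _; apply nle_compat.
  - intros r s t _ _ Kt; apply nle_add; auto.
  - intros; apply nle_mul; auto.
  - edestruct (meet_props r s m) as (A1 & A2 & A3); eauto.
  - edestruct (meet_props r s m) as (A1 & A2 & A3); eauto.
  - edestruct (meet_props r s m) as (A1 & A2 & A3); eauto.
  - edestruct (join_props r s m) as (A1 & A2 & A3); eauto.
  - edestruct (join_props r s m) as (A1 & A2 & A3); eauto.
  - edestruct (join_props r s m) as (A1 & A2 & A3); eauto.
  - intros r s t m1 m2 Kr Ks Kt _ _; apply fring; auto.
  - intros r n _; apply reduced.
Qed.

End Generic.


Definition wexp (e : R) : R := exp (- / e).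

Lemma wexp_pos e : 0 < wexp e.
Proof. apply exp_pos. Qed.

Lemma exp_pow_nat a n : exp (INR n * a) = exp a ^ n.
Proof.
  induction n.
  - simpl. rewrite Rmult_0_l, exp_0; auto.
  - rewrite S_INR, Rmult_plus_distr_r, Rmult_1_l, exp_plus, IHn; simpl; ring.
Qed.

Lemma negl_wexp : negligible wexp.
Proof.
  intros m. set (M := INR (S m)).
  assert (HM : 1 <= M) by (unfold M; rewrite S_INR; generalize (pos_INR m); lra).
  exists (M ^ S m), 1. split; [unfold inI; lra|].
  intros e He Hle.
  unfold wexp. rewrite Rabs_right by (apply Rle_ge, Rlt_le, exp_pos).
  set (y := / e).
  assert (Hy : 1 <= y).
  { unfold y. apply Rmult_le_reg_r with e; [lra|]. rewrite Rinv_l; lra. }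
  assert (E1 : exp y = exp (y / M) ^ S m).
  { rewrite <- exp_pow_nat. f_equal. fold M. field. lra. }
  assert (E2 : y / M <= exp (y / M)).
  { assert (0 < y / M) by (apply Rdiv_lt_0_compat; lra).
    generalize (exp_ineq1 (y / M) ltac:(lra)); lra. }
  assert (E3 : (y / M) ^ S m <= exp y).
  { rewrite E1. apply pow_incr. split; auto. apply Rlt_le, Rdiv_lt_0_compat; lra. }
  assert (P1 : 0 < (y / M) ^ S m) by (apply pow_lt, Rdiv_lt_0_compat; lra).
  rewrite exp_Ropp.
  apply Rle_trans with (/ ((y / M) ^ S m)).
  { apply Rinv_le_contravar; auto. }
  replace (/ ((y / M) ^ S m)) with (M ^ S m * e ^ S m).
  - assert (0 < M ^ S m) by (apply pow_lt; lra).
    assert (0 < e ^ m) by (apply pow_lt; lra).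
    simpl (e ^ S m). assert (0 < M ^ S m * e ^ m) by (apply Rmult_lt_0_compat; lra).
    replace (M ^ S m * (e * e ^ m)) with ((M ^ S m * e ^ m) * e) by ring.
    replace (M ^ S m * e ^ m) with ((M ^ S m * e ^ m) * 1) at 2 by ring.
    apply Rmult_le_compat_l; lra.
  - unfold y. rewrite <- Rpow_mult_distr. rewrite <- pow_inv.
    f_equal. field. lra.
Qed.

Lemma core1 u v D : 0 <= u -> 0 <= v -> u ^ 2 + v ^ 2 <= D -> u ^ 2 * v ^ 4 <= u * v * D ^ 2.
Proof.
  intros Hu Hv HD.
  assert (A : 0 <= u * v) by nra.
  assert (B1 : (u ^ 2 + v ^ 2) ^ 2 <= D ^ 2) by (apply pow_incr; nra).
  assert (B2 : u * v ^ 3 <= (u ^ 2 + v ^ 2) ^ 2) by nra.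
  replace (u ^ 2 * v ^ 4) with (u * v * (u * v ^ 3)) by ring.
  apply Rmult_le_compat_l; lra.
Qed.

Lemma ineq_L1 r s w : 0 < w ->
  Rabs (r * s ^ 2 / (r ^ 2 + s ^ 2 + w)) ^ 2 <= Rabs (r * s).
Proof.
  intros Hw. set (D := r ^ 2 + s ^ 2 + w).
  assert (HD : 0 < D) by (unfold D; nra).
  rewrite pow2_abs.
  replace ((r * s ^ 2 / D) ^ 2) with ((r * s ^ 2) ^ 2 / D ^ 2) by (field; lra).
  apply Rmult_le_reg_r with (D ^ 2); [apply pow_lt; lra|].
  replace ((r * s ^ 2) ^ 2 / D ^ 2 * D ^ 2) with ((r * s ^ 2) ^ 2) by (field; lra).
  replace ((r * s ^ 2) ^ 2) with (Rabs r ^ 2 * Rabs s ^ 4).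
  - rewrite Rabs_mult. apply core1; try apply Rabs_pos.
    rewrite !pow2_abs. unfold D; lra.
  - replace (Rabs s ^ 4) with ((Rabs s ^ 2) ^ 2) by ring. rewrite !pow2_abs. ring.
Qed.

Lemma ineq_L2 s r w : 0 < w ->
  Rabs (s * w / (r ^ 2 + s ^ 2 + w)) ^ 2 <= Rabs w.
Proof.
  intros Hw. set (D := r ^ 2 + s ^ 2 + w).
  assert (HD : 0 < D) by (unfold D; nra).
  rewrite (Rabs_right w) by lra.
  replace (Rabs (s * w / D) ^ 2) with ((s * w) ^ 2 / D ^ 2)
    by (rewrite pow2_abs; field; lra).
  apply Rmult_le_reg_r with (D ^ 2); [apply pow_lt; lra|].
  replace ((s * w) ^ 2 / D ^ 2 * D ^ 2) with ((s * w) ^ 2) by (field; lra).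
  assert (HD2 : s ^ 2 + w <= D) by (unfold D; nra).
  assert (B1 : (s ^ 2 + w) ^ 2 <= D ^ 2) by (apply pow_incr; nra).
  assert (B2 : s ^ 2 * w <= (s ^ 2 + w) ^ 2) by nra.
  replace ((s * w) ^ 2) with (w * (s ^ 2 * w)) by ring.
  apply Rle_trans with (w * (s ^ 2 + w) ^ 2); apply Rmult_le_compat_l; lra.
Qed.

Definition Dn (r s : net) (e : R) : R := r e ^ 2 + s e ^ 2 + wexp e.
Definition na (r s x : net) : net := fun e => x e * (s e ^ 2 / Dn r s e).
Definition nb (r s x : net) : net := fun e => x e * ((r e ^ 2 + wexp e) / Dn r s e).

Lemma Dn_pos r s e : 0 < Dn r s e.
Proof. unfold Dn. generalize (wexp_pos e). nra. Qed.

Lemma abs_frac x q : 0 <= q <= 1 -> Rabs (x * q) <= Rabs x.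
Proof.
  intros Hq. rewrite Rabs_mult, (Rabs_right q) by lra.
  generalize (Rabs_pos x). nra.
Qed.

Lemma frac_le1 a D : 0 <= a -> a <= D -> 0 < D -> 0 <= a / D <= 1.
Proof.
  intros. split; [apply Rdiv_le_0_compat; lra|].
  apply Rmult_le_reg_r with D; auto. unfold Rdiv; rewrite Rmult_assoc, Rinv_l; lra.
Qed.

Lemma normal_formula r s x : moderate x -> geq (nmul r s) (nconst 0) ->
  moderate (na r s x) /\ moderate (nb r s x) /\
  geq (nmul r (na r s x)) (nconst 0) /\ geq (nmul s (nb r s x)) (nconst 0) /\
  geq x (nadd (na r s x) (nb r s x)).
Proof.
  intros Hx Hrs.
  assert (Hn : negligible (fun e => Rabs (r e * s e))).
  { apply negl_le with (fun e => nmul r s e - nconst 0 e); auto.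
    intros; unfold nmul, nconst; rewrite Rminus_0_r, Rabs_Rabsolu; lra. }
  split; [|split; [|split; [|split]]].
  - apply mod_le with x; auto. intros e _. apply abs_frac.
    generalize (wexp_pos e); intro.
    apply frac_le1; [nra|unfold Dn; nra|apply Dn_pos].
  - apply mod_le with x; auto. intros e _. apply abs_frac.
    generalize (wexp_pos e); intro.
    apply frac_le1; [nra|unfold Dn; nra|apply Dn_pos].
  - unfold geq.
    apply negl_eq with (fun e => (r e * s e ^ 2 / (r e ^ 2 + s e ^ 2 + wexp e)) * x e).
    + apply negl_mulmod; auto.
      apply negl_pow with (fun e => Rabs (r e * s e)) 2%nat; auto.
      intros e _. rewrite Rabs_Rabsolu. apply ineq_L1, wexp_pos.
    + intros e _. unfold nmul, nconst, na, Dn. field.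
      generalize (Dn_pos r s e); unfold Dn; lra.
  - unfold geq.
    apply negl_eq with (fun e => (s e * r e ^ 2 / (s e ^ 2 + r e ^ 2 + wexp e) +
                                  s e * wexp e / (r e ^ 2 + s e ^ 2 + wexp e)) * x e).
    + apply negl_mulmod; auto. apply negl_add.
      * apply negl_pow with (fun e => Rabs (r e * s e)) 2%nat; auto.
        intros e _. rewrite Rabs_Rabsolu, (Rmult_comm (r e) (s e)). apply ineq_L1, wexp_pos.
      * apply negl_pow with wexp 2%nat; auto using negl_wexp.
        intros e _. apply ineq_L2, wexp_pos.
    + intros e _. unfold nmul, nconst, nb, Dn.
      replace (s e ^ 2 + r e ^ 2 + wexp e) with (r e ^ 2 + s e ^ 2 + wexp e) by ring.
      field. generalize (Dn_pos r s e); unfold Dn; lra.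
  - apply geq_pw. intros e _. unfold nadd, na, nb, Dn. field.
    generalize (Dn_pos r s e); unfold Dn; lra.
Qed.

Definition smin (r s : net) : net := fun e => (r e + s e - sqrt ((r e - s e) ^ 2 + wexp e)) / 2.
Definition smax (r s : net) : net := fun e => (r e + s e + sqrt ((r e - s e) ^ 2 + wexp e)) / 2.

Lemma sqrt_ineq d w : 0 < w -> Rabs ((sqrt (d ^ 2 + w) - Rabs d) / 2) ^ 2 <= Rabs w.
Proof.
  intros Hw. rewrite pow2_abs, (Rabs_right w) by lra.
  assert (H0 : 0 <= d ^ 2 + w) by nra.
  set (q := sqrt (d ^ 2 + w)).
  assert (Hq : 0 <= q) by apply sqrt_pos.
  assert (Hq2 : q * q = d ^ 2 + w) by (apply sqrt_sqrt; auto).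
  assert (Hd : Rabs d ^ 2 = d ^ 2) by apply pow2_abs.
  assert (Ha : 0 <= Rabs d) by apply Rabs_pos.
  assert (Hqd : Rabs d <= q) by nra.
  nra.
Qed.

Lemma min_formula r s : moderate r -> moderate s ->
  moderate (smin r s) /\ geq (smin r s) (nmin r s) /\
  moderate (smax r s) /\ geq (smax r s) (nmax r s).
Proof.
  intros Hr Hs.
  assert (G1 : geq (smin r s) (nmin r s)).
  { unfold geq. apply negl_pow with wexp 2%nat; auto using negl_wexp.
    intros e _. unfold smin, nmin.
    replace ((r e + s e - sqrt ((r e - s e) ^ 2 + wexp e)) / 2 - Rmin (r e) (s e))
      with (- ((sqrt ((r e - s e) ^ 2 + wexp e) - Rabs (r e - s e)) / 2)).
    - rewrite Rabs_Ropp. apply sqrt_ineq, wexp_pos.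
    - unfold Rmin; destruct Rle_dec; unfold Rabs; destruct Rcase_abs; lra. }
  assert (G2 : geq (smax r s) (nmax r s)).
  { unfold geq. apply negl_pow with wexp 2%nat; auto using negl_wexp.
    intros e _. unfold smax, nmax.
    replace ((r e + s e + sqrt ((r e - s e) ^ 2 + wexp e)) / 2 - Rmax (r e) (s e))
      with ((sqrt ((r e - s e) ^ 2 + wexp e) - Rabs (r e - s e)) / 2).
    - apply sqrt_ineq, wexp_pos.
    - unfold Rmax; destruct Rle_dec; unfold Rabs; destruct Rcase_abs; lra. }
  assert (M : moderate (fun e => Rabs (r e) + Rabs (s e))).
  { apply mod_add; [apply mod_le with r|apply mod_le with s]; auto;
      intros; rewrite Rabs_Rabsolu; lra. }
  repeat split; auto.
  - apply mod_geq with (nmin r s); [|apply geq_sym; auto].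
    apply mod_le with (fun e => Rabs (r e) + Rabs (s e)); auto.
    intros e _; unfold nmin, Rmin; destruct Rle_dec; unfold Rabs; repeat destruct Rcase_abs; lra.
  - apply mod_geq with (nmax r s); [|apply geq_sym; auto].
    apply mod_le with (fun e => Rabs (r e) + Rabs (s e)); auto.
    intros e _; unfold nmax, Rmax; destruct Rle_dec; unfold Rabs; repeat destruct Rcase_abs; lra.
Qed.


Lemma loc_pos x : 0 < x -> locally x (fun t => 0 < t).
Proof.
  intros Hx. exists (mkposreal x Hx). intros y Hy.
  change (Rabs (y - x) < x) in Hy. apply Rabs_def2 in Hy. simpl in Hy. lra.
Qed.

Lemma exdp f g x : ex_derive f x -> ex_derive g x -> ex_derive (fun t => f t + g t) x.
Proof. intros H1 H2. exact (ex_derive_plus f g x H1 H2). Qed.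
Lemma Dplus f g x : ex_derive f x -> ex_derive g x -> Derive (fun t => f t + g t) x = Derive f x + Derive g x.
Proof. intros H1 H2. exact (Derive_plus f g x H1 H2). Qed.

Definition Ek (n : nat) (f : R -> R) : Prop := forall x, 0 < x -> ex_derive (Derive_n f n) x.
Lemma Ek0_intro f : (forall x, 0 < x -> ex_derive f x) -> Ek 0 f.
Proof. auto. Qed.

Definition Up (n : nat) (f : R -> R) : Prop := forall k, (k <= n)%nat -> Ek k f.

Lemma Ek_S n f : Ek (S n) f <-> Ek n (Derive f).
Proof.
  assert (Eq : forall t, Derive_n (Derive f) n t = Derive_n f (S n) t).
  { intros t. rewrite <- Nat.add_1_r. apply (Derive_n_comp f n 1). }
  split; intros H x Hx.
  - apply ex_derive_ext with (Derive_n f (S n)); [intros; rewrite Eq; auto|apply H; auto].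
  - apply ex_derive_ext with (Derive_n (Derive f) n); [intros; rewrite Eq; auto|apply H; auto].
Qed.

Lemma Up_0 f : Up 0 f <-> Ek 0 f.
Proof. split; intros H; [apply H; auto|]. intros k Hk. assert (k = 0%nat) by lia. subst k. exact H. Qed.

Lemma Up_S n f : Up (S n) f <-> Ek 0 f /\ Up n (Derive f).
Proof.
  split.
  - intros H. split; [apply H; lia|]. intros k Hk. apply (proj1 (Ek_S k f)). apply H. lia.
  - intros [H0 H] k Hk. destruct k; [exact H0|]. apply (proj2 (Ek_S k f)). apply H. lia.
Qed.

Lemma Up_le n f : Up (S n) f -> Up n f.
Proof. intros H k Hk; apply H; lia. Qed.

Lemma Ek_ext n f g : (forall x, 0 < x -> f x = g x) -> Ek n f -> Ek n g.
Proof.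
  intros Heq H x Hx. apply ex_derive_ext_loc with (Derive_n f n); [|apply H; auto].
  apply filter_imp with (fun t => 0 < t); [|apply loc_pos; auto].
  intros t Ht. apply Derive_n_ext_loc.
  apply filter_imp with (fun u => 0 < u); [|apply loc_pos; auto]. auto.
Qed.

Lemma Up_ext n f g : (forall x, 0 < x -> f x = g x) -> Up n f -> Up n g.
Proof. intros Heq H k Hk. apply Ek_ext with f; auto. Qed.

Lemma Ek0_ex f x : Ek 0 f -> 0 < x -> ex_derive f x.
Proof. intros H Hx; apply (H x Hx). Qed.

Lemma Up_const n : forall c, Up n (fun _ => c).
Proof.
  induction n; intros c.
  - apply (proj2 (Up_0 _)). apply Ek0_intro; intros x _. apply ex_derive_const.
  - apply (proj2 (Up_S _ _)). split; [apply Ek0_intro; intros x _; apply ex_derive_const|].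
    apply Up_ext with (fun _ => 0); auto. intros; rewrite Derive_const; auto.
Qed.

Lemma Up_id n : Up n (fun x => x).
Proof.
  destruct n.
  - apply (proj2 (Up_0 _)). apply Ek0_intro; intros x _. apply ex_derive_id.
  - apply (proj2 (Up_S _ _)). split; [apply Ek0_intro; intros x _; apply ex_derive_id|].
    apply Up_ext with (fun _ => 1); auto using Up_const. intros; rewrite Derive_id; auto.
Qed.

Lemma Up_plus n : forall f g, Up n f -> Up n g -> Up n (fun x => f x + g x).
Proof.
  induction n; intros f g Hf Hg.
  - apply (proj2 (Up_0 _)). apply (proj1 (Up_0 _)) in Hf. apply (proj1 (Up_0 _)) in Hg. apply Ek0_intro; intros x Hx.
    apply exdp; [apply Hf|apply Hg]; auto.
  - apply (proj1 (Up_S _ _)) in Hf as [Hf0 Hf]. apply (proj1 (Up_S _ _)) in Hg as [Hg0 Hg]. apply (proj2 (Up_S _ _)). split.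
    + apply Ek0_intro; intros x Hx. apply exdp; [apply Hf0|apply Hg0]; auto.
    + apply Up_ext with (fun x => Derive f x + Derive g x); auto.
      intros x Hx. rewrite Dplus; try reflexivity; try (apply Hf0; auto); try (apply Hg0; auto).
Qed.

Lemma Up_mult n : forall f g, Up n f -> Up n g -> Up n (fun x => f x * g x).
Proof.
  induction n; intros f g Hf Hg.
  - apply (proj2 (Up_0 _)). apply (proj1 (Up_0 _)) in Hf. apply (proj1 (Up_0 _)) in Hg. apply Ek0_intro; intros x Hx.
    apply ex_derive_mult; [apply Hf|apply Hg]; auto.
  - assert (Hf' := Up_le _ _ Hf). assert (Hg' := Up_le _ _ Hg).
    apply (proj1 (Up_S _ _)) in Hf as [Hf0 Hf]. apply (proj1 (Up_S _ _)) in Hg as [Hg0 Hg]. apply (proj2 (Up_S _ _)). split.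
    + apply Ek0_intro; intros x Hx. apply ex_derive_mult; [apply Hf0|apply Hg0]; auto.
    + apply Up_ext with (fun x => Derive f x * g x + f x * Derive g x).
      * intros x Hx. rewrite Derive_mult; try reflexivity; try (apply Hf0; auto); try (apply Hg0; auto).
      * apply Up_plus; apply IHn; auto.
Qed.

Lemma Up_inv n : forall u, Up n u -> (forall x, 0 < x -> 0 < u x) -> Up n (fun x => / u x).
Proof.
  induction n; intros u Hu Hpos.
  - apply (proj2 (Up_0 _)). apply (proj1 (Up_0 _)) in Hu. apply Ek0_intro; intros x Hx.
    apply ex_derive_inv; [apply Hu; auto|]. specialize (Hpos x Hx); lra.
  - assert (Hu' := Up_le _ _ Hu).
    apply (proj1 (Up_S _ _)) in Hu as [Hu0 Hu]. apply (proj2 (Up_S _ _)). split.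
    + apply Ek0_intro; intros x Hx. apply ex_derive_inv; [apply Hu0; auto|]. specialize (Hpos x Hx); lra.
    + apply Up_ext with (fun x => ((fun _ => -1) x * Derive u x) * (/ u x * / u x)).
      * intros x Hx. rewrite Derive_inv; [|apply Hu0; auto|specialize (Hpos x Hx); lra].
        field. specialize (Hpos x Hx); lra.
      * apply Up_mult; [apply Up_mult; auto using Up_const|apply Up_mult; apply IHn; auto].
Qed.

Lemma Up_sqrt n : forall h, Up n h -> (forall x, 0 < x -> 0 < h x) -> Up n (fun x => sqrt (h x)).
Proof.
  induction n; intros h Hh Hpos.
  - apply (proj2 (Up_0 _)). apply (proj1 (Up_0 _)) in Hh. apply Ek0_intro; intros x Hx.
    destruct (Hh x Hx) as [l Hl]. eexists. apply is_derive_sqrt; eauto.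
  - assert (Hh' := Up_le _ _ Hh).
    apply (proj1 (Up_S _ _)) in Hh as [Hh0 Hh]. apply (proj2 (Up_S _ _)). split.
    + apply Ek0_intro; intros x Hx. destruct (Hh0 x Hx) as [l Hl]. eexists. apply is_derive_sqrt; eauto.
    + apply Up_ext with (fun x => Derive h x * ((fun _ => / 2) x * / sqrt (h x))).
      * intros x Hx. destruct (Hh0 x Hx) as [l Hl]. change (is_derive h x l) in Hl.
        assert (E1 : Derive (fun t => sqrt (h t)) x = l / (2 * sqrt (h x)))
          by (apply is_derive_unique; apply is_derive_sqrt; auto).
        assert (E2 : Derive h x = l) by (apply is_derive_unique; auto).
        rewrite E1, E2.
        assert (0 < sqrt (h x)) by (apply sqrt_lt_R0; auto).
        field. lra.
      * apply Up_mult; auto. apply Up_mult; auto using Up_const.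
        apply Up_inv; auto. intros; apply sqrt_lt_R0; auto.
Qed.

Lemma Up_exp n : forall h, Up n h -> Up n (fun x => exp (h x)).
Proof.
  induction n; intros h Hh.
  - apply (proj2 (Up_0 _)). apply (proj1 (Up_0 _)) in Hh. apply Ek0_intro; intros x Hx.
    destruct (Hh x Hx) as [l Hl]. eexists. apply (is_derive_comp exp h); eauto.
    apply is_derive_exp.
  - assert (Hh' := Up_le _ _ Hh).
    apply (proj1 (Up_S _ _)) in Hh as [Hh0 Hh]. apply (proj2 (Up_S _ _)). split.
    + apply Ek0_intro; intros x Hx. destruct (Hh0 x Hx) as [l Hl]. eexists.
      apply (is_derive_comp exp h); eauto. apply is_derive_exp.
    + apply Up_ext with (fun x => Derive h x * exp (h x)).
      * intros x Hx. destruct (Hh0 x Hx) as [l Hl]. change (is_derive h x l) in Hl.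
        assert (E1 : Derive (fun t => exp (h t)) x = l * exp (h x))
          by (apply is_derive_unique; exact (is_derive_comp exp h x _ _ (is_derive_exp (h x)) Hl)).
        assert (E2 : Derive h x = l) by (apply is_derive_unique; auto).
        rewrite E1, E2. reflexivity.
      * apply Up_mult; auto.
Qed.


Definition Sm (g : R -> R) : Prop := forall n, Up n g.

Lemma Sm_smooth r g : (forall e, inI e -> g e = r e) -> Sm g -> smooth_net r.
Proof. intros H S. exists g. split; auto. intros n x Hx. apply (S n n); auto. Qed.

Lemma smooth_Sm r : smooth_net r -> exists g, (forall e, inI e -> g e = r e) /\ Sm g.
Proof. intros (g & H & S). exists g. split; auto. intros n k _ x Hx. apply S; auto. Qed.

Lemma Sm_ext f g : (forall x, 0 < x -> f x = g x) -> Sm f -> Sm g.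
Proof. intros H S n. apply Up_ext with f; auto. Qed.
Lemma Sm_const c : Sm (fun _ => c).
Proof. intros n; apply Up_const. Qed.
Lemma Sm_id : Sm (fun x => x).
Proof. intros n; apply Up_id. Qed.
Lemma Sm_plus f g : Sm f -> Sm g -> Sm (fun x => f x + g x).
Proof. intros H1 H2 n; apply Up_plus; auto. Qed.
Lemma Sm_mult f g : Sm f -> Sm g -> Sm (fun x => f x * g x).
Proof. intros H1 H2 n; apply Up_mult; auto. Qed.
Lemma Sm_inv u : Sm u -> (forall x, 0 < x -> 0 < u x) -> Sm (fun x => / u x).
Proof. intros H1 H2 n; apply Up_inv; auto. Qed.
Lemma Sm_sqrt u : Sm u -> (forall x, 0 < x -> 0 < u x) -> Sm (fun x => sqrt (u x)).
Proof. intros H1 H2 n; apply Up_sqrt; auto. Qed.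
Lemma Sm_exp u : Sm u -> Sm (fun x => exp (u x)).
Proof. intros H1 n; apply Up_exp; auto. Qed.

Lemma Sm_opp f : Sm f -> Sm (fun x => - f x).
Proof.
  intros H. apply Sm_ext with (fun x => (fun _ => -1) x * f x); [intros; ring|].
  apply Sm_mult; auto using Sm_const.
Qed.
Lemma Sm_minus f g : Sm f -> Sm g -> Sm (fun x => f x - g x).
Proof.
  intros H1 H2. apply Sm_ext with (fun x => f x + - g x); [intros; ring|].
  apply Sm_plus; auto using Sm_opp.
Qed.

Lemma Sm_wexp : Sm wexp.
Proof.
  apply Sm_ext with (fun x => exp (- (/ x))); [intros; reflexivity|].
  apply Sm_exp, Sm_opp, Sm_inv; auto using Sm_id.
Qed.

Lemma Sm_sq f : Sm f -> Sm (fun x => f x ^ 2).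
Proof. intros H. apply Sm_ext with (fun x => f x * f x); [intros; ring|]. apply Sm_mult; auto. Qed.

Lemma smooth_cont r : smooth_net r -> cont_net r.
Proof.
  intros Hs. destruct (smooth_Sm _ Hs) as (g & Hg & S). intros e He eps Heps.
  assert (Hd : ex_derive g e).
  { apply (S 0%nat 0%nat); [lia| destruct He; lra]. }
  apply ex_derive_continuous in Hd.
  specialize (Hd (ball (g e) (mkposreal eps Heps)) (locally_ball _ _)).
  destruct Hd as [d Hd]. exists d. split; [apply cond_pos|]. intros x Hx Hxe.
  rewrite <- (Hg x Hx), <- (Hg e He).
  assert (B : ball (g e) (mkposreal eps Heps) (g x)) by (apply Hd; exact Hxe).
  exact B.
Qed.

Lemma cont_const c : cont_net (nconst c).
Proof.
  intros e _ eps Heps. exists 1. split; [lra|]. intros. unfold nconst.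
  rewrite Rminus_eq_0, Rabs_R0; auto.
Qed.

Lemma cont_lip a b h : cont_net a -> cont_net b ->
  (forall x y, inI x -> inI y -> Rabs (h x - h y) <= Rabs (a x - a y) + Rabs (b x - b y)) ->
  cont_net h.
Proof.
  intros Ha Hb H e He eps Heps.
  destruct (Ha e He (eps / 2) ltac:(lra)) as (d1 & Hd1 & B1).
  destruct (Hb e He (eps / 2) ltac:(lra)) as (d2 & Hd2 & B2).
  exists (Rmin d1 d2). split; [apply Rmin_glb_lt; auto|].
  intros x Hx Hxe.
  specialize (B1 x Hx (Rlt_le_trans _ _ _ Hxe (Rmin_l _ _))).
  specialize (B2 x Hx (Rlt_le_trans _ _ _ Hxe (Rmin_r _ _))).
  specialize (H x e Hx He). lra.
Qed.


Theorem full_part : reduced_normal_fring K_full Q_all.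
Proof.
  apply generic_fring; unfold K_full, Q_all; auto.
  - apply mod_const.
  - apply mod_const.
  - intros; apply mod_add; auto.
  - intros; apply mod_mul; auto.
  - intros r H; apply mod_le with r; auto. intros; unfold nopp; rewrite Rabs_Ropp; lra.
  - intros r s Hr Hs. destruct (min_formula r s Hr Hs) as (A1 & A2 & _). eauto.
  - intros r s Hr Hs. destruct (min_formula r s Hr Hs) as (_ & _ & A1 & A2). eauto.
  - intros r s Hr Hs Hrs x Hx. destruct (normal_formula r s x Hx Hrs) as (A1 & A2 & A3 & A4 & A5).
    exists (na r s x), (nb r s x). auto.
Qed.


Lemma Dpos_gen a b e : 0 < a ^ 2 + b ^ 2 + wexp e.
Proof. generalize (wexp_pos e). nra. Qed.

Theorem sm_part : reduced_normal_fring K_sm cont_net.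
Proof.
  apply generic_fring; unfold K_sm.
  - intros r [_ H]; auto.
  - intros r [H _]; apply smooth_cont; auto.
  - apply cont_const.
  - apply cont_lip.
  - split; [apply Sm_smooth with (fun _ => 0); auto using Sm_const|apply mod_const].
  - split; [apply Sm_smooth with (fun _ => 1); auto using Sm_const|apply mod_const].
  - intros r s [Sr Mr] [Ss Ms]. split; [|apply mod_add; auto].
    destruct (smooth_Sm _ Sr) as (g1 & E1 & S1). destruct (smooth_Sm _ Ss) as (g2 & E2 & S2).
    apply Sm_smooth with (fun x => g1 x + g2 x); [|apply Sm_plus; auto].
    intros e He; unfold nadd; rewrite E1, E2; auto.
  - intros r s [Sr Mr] [Ss Ms]. split; [|apply mod_mul; auto].
    destruct (smooth_Sm _ Sr) as (g1 & E1 & S1). destruct (smooth_Sm _ Ss) as (g2 & E2 & S2).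
    apply Sm_smooth with (fun x => g1 x * g2 x); [|apply Sm_mult; auto].
    intros e He; unfold nmul; rewrite E1, E2; auto.
  - intros r [Sr Mr]. split.
    + destruct (smooth_Sm _ Sr) as (g1 & E1 & S1).
      apply Sm_smooth with (fun x => - g1 x); [|apply Sm_opp; auto].
      intros e He; unfold nopp; rewrite E1; auto.
    + apply mod_le with r; auto. intros; unfold nopp; rewrite Rabs_Ropp; lra.
  - intros r s [Sr Mr] [Ss Ms].
    destruct (min_formula r s Mr Ms) as (A1 & A2 & _ & _).
    exists (smin r s). split; auto. split; auto.
    destruct (smooth_Sm _ Sr) as (g1 & E1 & S1). destruct (smooth_Sm _ Ss) as (g2 & E2 & S2).
    apply Sm_smooth with
      (fun x => (g1 x + g2 x - sqrt ((g1 x - g2 x) ^ 2 + wexp x)) * (fun _ => / 2) x).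
    + intros e He; unfold smin; rewrite E1, E2; auto.
    + apply Sm_mult; [|apply Sm_const]. apply Sm_minus; [apply Sm_plus; auto|].
      apply Sm_sqrt; [apply Sm_plus; [apply Sm_sq, Sm_minus; auto|apply Sm_wexp]|].
      intros x _. cbv beta. generalize (wexp_pos x) (pow2_ge_0 (g1 x - g2 x)). lra.
  - intros r s [Sr Mr] [Ss Ms].
    destruct (min_formula r s Mr Ms) as (_ & _ & A1 & A2).
    exists (smax r s). split; auto. split; auto.
    destruct (smooth_Sm _ Sr) as (g1 & E1 & S1). destruct (smooth_Sm _ Ss) as (g2 & E2 & S2).
    apply Sm_smooth with
      (fun x => (g1 x + g2 x + sqrt ((g1 x - g2 x) ^ 2 + wexp x)) * (fun _ => / 2) x).
    + intros e He; unfold smax; rewrite E1, E2; auto.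
    + apply Sm_mult; [|apply Sm_const]. apply Sm_plus; [apply Sm_plus; auto|].
      apply Sm_sqrt; [apply Sm_plus; [apply Sm_sq, Sm_minus; auto|apply Sm_wexp]|].
      intros x _. cbv beta. generalize (wexp_pos x) (pow2_ge_0 (g1 x - g2 x)). lra.
  - intros r s [Sr Mr] [Ss Ms] Hrs x [Sx Mx].
    destruct (normal_formula r s x Mx Hrs) as (A1 & A2 & A3 & A4 & A5).
    destruct (smooth_Sm _ Sr) as (g1 & E1 & S1). destruct (smooth_Sm _ Ss) as (g2 & E2 & S2).
    destruct (smooth_Sm _ Sx) as (g3 & E3 & S3).
    assert (SD : Sm (fun t => / (g1 t ^ 2 + g2 t ^ 2 + wexp t))).
    { apply Sm_inv; [apply Sm_plus; [apply Sm_plus; apply Sm_sq; auto|apply Sm_wexp]|].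
      intros; apply Dpos_gen. }
    exists (na r s x), (nb r s x). repeat split; auto.
    + apply Sm_smooth with (fun t => g3 t * (g2 t ^ 2 * / (g1 t ^ 2 + g2 t ^ 2 + wexp t))).
      * intros e He; unfold na, Dn; rewrite E1, E2, E3; auto.
      * apply Sm_mult; auto. apply Sm_mult; auto. apply Sm_sq; auto.
    + apply Sm_smooth with (fun t => g3 t * ((g1 t ^ 2 + wexp t) * / (g1 t ^ 2 + g2 t ^ 2 + wexp t))).
      * intros e He; unfold nb, Dn; rewrite E1, E2, E3; auto.
      * apply Sm_mult; auto. apply Sm_mult; auto. apply Sm_plus; [apply Sm_sq; auto|apply Sm_wexp].
Qed.


Theorem corollary4p21 :
  reduced_normal_fring K_full Q_all /\ reduced_normal_fring K_sm cont_net.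
Proof.
  split; [exact full_part|exact sm_part].
Qed.
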